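(* Let $G$ be a group acting on a set $X$. Let $A$ be a nonempty finite subset of $G$ and $Y$ a finite subset of $X$, and suppose $|A\cdot Y|\leq\alpha|A|$ for some $\alpha\in\mathbb{R}_{\geq0}$. Then there exists a nonempty subset $B\subset A$ such that $|CB\cdot Y|\leq\alpha|CB|$ for every finite subset $C$ of $G$.
   Context: $CB=\{cb\mid c\in C,b\in B\}$ and $S\cdot Y=\{s\cdot y\mid s\in S,y\in Y\}$. *)

(* Defs.v *)
From HB Require Import structures.
From mathcomp Require Import all_boot all_order all_algebra.
From mathcomp Require Import monoid.
From mathcomp Require Import finmap.
Set Implicit Arguments. Unset Strict Implicit. Unset Printing Implicit Defensive.
Import Order.TTheory GRing.Theory Num.Theory.
Local Open Scope fset_scope.

Definition is_action (G : groupType) (X : Type) (act : G -> X -> X) : Prop :=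
  (forall x, act 1%g x = x) /\
  (forall g h x, act (g * h)%g x = act g (act h x)).

Definition fset_mul (G : groupType) (C B : {fset G}) : {fset G} :=
  [fset (c * b)%g | c in C, b in B].

Definition fset_act (G : groupType) (X : choiceType) (act : G -> X -> X)
  (S : {fset G}) (Y : {fset X}) : {fset X} :=
  [fset act s y | s in S, y in Y].

(* Main.v *)
Require Import Defs.
From HB Require Import structures.
From mathcomp Require Import all_boot all_order all_algebra.
From mathcomp Require Import monoid finmap.
From mathcomp Require Import reals.
From mathcomp Require Import lra.
Import Order.TTheory GRing.Theory Num.Theory.
Local Open Scope fset_scope.
Local Open Scope ring_scope.

Lemma seq_argmin (R : realType) (T : eqType) (f : T -> R) (s : seq T) :
  s != [::] -> exists2 x, x \in s & forall y, y \in s -> f x <= f y.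
Proof.
elim: s => // a s IH _.
case: (eqVneq s [::]) => [->|/IH [x xs Hx]].
  by exists a; rewrite ?mem_head // => y; rewrite inE => /eqP ->.
case: (lerP (f a) (f x)) => H.
  exists a; first by rewrite mem_head.
  move=> y; rewrite inE => /orP [/eqP ->//|/Hx]; exact: le_trans.
exists x; first by rewrite inE xs orbT.
move=> y; rewrite inE => /orP [/eqP ->|/Hx//]; exact: ltW.
Qed.

Lemma card_act_inj (G : groupType) (X : choiceType) (act : G -> X -> X)
  (Hact : is_action act) c (S : {fset X}) :
  #|` [fset act c z | z in S]| = #|` S|.
Proof.
rewrite card_imfset //=.
move=> x y E. case: Hact => H1 HM.
by rewrite -(H1 x) -(H1 y) -(mulVg c) !HM E.
Qed.

Lemma card_mul_inj (G : groupType) c (S : {fset G}) :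
  #|` [fset (c * z)%g | z in S]| = #|` S|.
Proof.
rewrite card_imfset //=.
by move=> x y E; rewrite -(mul1g x) -(mul1g y) -(mulVg c) -!mulgA E.
Qed.
Local Close Scope ring_scope.
Section S.
Variables (G : groupType) (X : choiceType)
  (act : G -> X -> X) (Hact : is_action act) (B C: {fset G}) (Y : {fset X}) (c : G) (cC : c \in C).
Let C' := C `\ c.
Let P := fset_mul C' B.
Let Q := [fset (c * b)%g | b in B].
Let D := [fset b in B | (c * b)%g \in P].
Let BY := fset_act act B Y.
Let PY := fset_act act P Y.
Let QY := [fset act c z | z in BY].
Let DY' := [fset act c z | z in fset_act act D Y].
Lemma s1 : fset_act act (fset_mul C B) Y `<=` PY `|` QY.
Proof.
apply/fsubsetP => z /imfset2P [g /= gCB [y /= yY ->]].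
move: gCB => /imfset2P [c' /= c'C [b /= bB ->]].
rewrite inE; case: (eqVneq c' c) => [->|ne].
  apply/orP; right; apply/imfsetP; exists (act b y).
    by apply/imfset2P; exists b => //; exists y.
  by case: Hact => _ ->.
apply/orP; left; apply/imfset2P; exists (c' * b)%g; last by exists y.
by apply/imfset2P; exists c'; [rewrite /= !inE ne c'C | exists b].
Qed.
Lemma s2 : DY' `<=` PY `&` QY.
Proof.
apply/fsubsetP => z /imfsetP [w /= /imfset2P [d /= dD [y /= yY ->]] ->].
move: dD; rewrite !inE => /andP [dB dP].
apply/andP; split.
  apply/imfset2P; exists (c * d)%g => //; exists y => //.
  by case: Hact => _ ->.
apply/imfsetP; exists (act d y) => //.
by apply/imfset2P; exists d => //; exists y.
Qed.
Lemma s3 : P `|` Q `<=` fset_mul C B.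
Proof.
apply/fsubsetP => z; rewrite inE => /orP [].
  move=> /imfset2P [c' /= c'C [b /= bB ->]].
  apply/imfset2P; exists c'; last by exists b.
  by move: c'C; rewrite !inE => /andP[].
move=> /imfsetP [b /= bB ->].
by apply/imfset2P; exists c => //; exists b.
Qed.
Lemma s4 : P `&` Q `<=` [fset (c * b)%g | b in D].
Proof.
apply/fsubsetP => z; rewrite inE => /andP [zP /imfsetP [b /= bB E]].
apply/imfsetP; exists b => //.
by rewrite !inE bB -E zP.
Qed.
End S.
Local Open Scope ring_scope.

Lemma key_ind (R : realType) (G : groupType) (X : choiceType)
  (act : G -> X -> X) (Hact : is_action act) (B : {fset G}) (Y : {fset X}) (K : R) :
  0 <= K -> #|` fset_act act B Y|%:R = K * #|` B|%:R ->
  (forall D, D `<=` B -> K * #|` D|%:R <= #|` fset_act act D Y|%:R) ->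
  forall C : {fset G},
      #|` fset_act act (fset_mul C B) Y|%:R <= K * #|` fset_mul C B|%:R.
Proof.
move=> K0 hB hmin C.
move: {2}#|` C| (erefl #|` C|) => n; elim: n C => [|n IH] C hC.
  move/cardfs0_eq: hC => ->.
  suff -> : fset_mul fset0 B = fset0.
    suff -> : fset_act act fset0 Y = fset0 by rewrite cardfs0 mulr0.
    by apply/fsetP => z; rewrite inE; apply/imfset2P => -[x]; rewrite inE.
  by apply/fsetP => z; rewrite inE; apply/imfset2P => -[x]; rewrite inE.
have [c cC] : exists c, c \in C.
  by apply/fset0Pn; rewrite -cardfs_eq0 hC.
set C' := C `\ c.
have hC' : #|` C'| = n by move: hC; rewrite (cardfsD1 c) cC add1n => -[].
have IHC := IH C' hC'.
set P := fset_mul C' B.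
set Q := [fset (c * b)%g | b in B].
set D := [fset b in B | (c * b)%g \in P].
set BY := fset_act act B Y.
set PY := fset_act act P Y.
set QY := [fset act c z | z in BY].
set DY' := [fset act c z | z in fset_act act D Y].
have s1 : fset_act act (fset_mul C B) Y `<=` PY `|` QY.
  exact: s1.
have s2 : DY' `<=` PY `&` QY.
  exact: s2.
have s3 : P `|` Q `<=` fset_mul C B.
  exact: s3.
have s4 : P `&` Q `<=` [fset (c * b)%g | b in D].
  exact: s4.
have cQY : #|` QY| = #|` BY| by apply: card_act_inj.
have cDY : #|` DY'| = #|` fset_act act D Y| by apply: card_act_inj.
have cQ : #|` Q| = #|` B| by apply: card_mul_inj.
have cD : #|` [fset (c * b)%g | b in D]| = #|` D| by apply: card_mul_inj.
have DB : D `<=` B by apply/fsubsetP => b; rewrite !inE => /andP[].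
have hD := hmin D DB.
have e1 := cardfsUI PY QY.
have e2 := cardfsUI P Q.
have l1 := fsubset_leq_card s1.
have l2 := fsubset_leq_card s2.
have l3 := fsubset_leq_card s3.
have l4 := fsubset_leq_card s4.
move: l1 l2 l3 l4; rewrite -!(ler_nat R) => l1 l2 l3 l4.
move/(congr1 (fun n => n%:R : R)): e1; rewrite !natrD => e1.
move/(congr1 (fun n => n%:R : R)): e2; rewrite !natrD => e2.
rewrite cQY cDY cD cQ in e1 e2 l1 l2 l3 l4.
rewrite -/BY in hB.
have : K * #|` P `|` Q|%:R <= K * #|` fset_mul C B|%:R by apply: ler_wpM2l.
have : K * #|` P `&` Q|%:R <= K * #|` D|%:R by apply: ler_wpM2l.
nra.
Qed.

Theorem mainTheorem10 (R : realType) (G : groupType) (X : choiceType)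
  (act : G -> X -> X) (Hact : is_action act)
  (A : {fset G}) (Y : {fset X}) (alpha : R) :
  A != fset0 -> 0 <= alpha ->
  (#|` fset_act act A Y|%:R <= alpha * #|` A|%:R) ->
  exists B : {fset G}, [/\ B != fset0, (B `<=` A)%fset &
    forall C : {fset G},
      #|` fset_act act (fset_mul C B) Y|%:R <= alpha * #|` fset_mul C B|%:R].
Proof.
move=> A0 al0 hA.
pose F := [fset S in fpowerset A | S != fset0].
pose f (S : {fset G}) : R := #|` fset_act act S Y|%:R / #|` S|%:R.
have AF : A \in F by rewrite !inE fpowersetE fsubset_refl A0.
have [B BF Bmin] : exists2 B, B \in enum_fset F & forall S, S \in enum_fset F -> f B <= f S.
  apply: seq_argmin; apply/negP => /eqP E.
  by move: AF; rewrite -[A \in F]/(A \in enum_fset F) E.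
move: BF; rewrite -[_ \in enum_fset F]/(B \in F) !inE fpowersetE => /andP [BA B0].
have Bpos : (0 < #|` B|)%N by rewrite lt0n cardfs_eq0.
have Bpos' : (0 : R) < #|` B|%:R by rewrite ltr0n.
exists B; split => // C.
have K0 : 0 <= f B by rewrite /f divr_ge0.
have KA : f B <= alpha.
  apply: le_trans (Bmin A AF) _.
  have Apos : (0 : R) < #|` A|%:R by rewrite ltr0n lt0n cardfs_eq0.
  by rewrite /f ler_pdivrMr.
have hB : #|` fset_act act B Y|%:R = f B * #|` B|%:R.
  by rewrite /f mulrVK // unitfE gt_eqF.
have hmin : forall D, D `<=` B -> f B * #|` D|%:R <= #|` fset_act act D Y|%:R.
  move=> D DB; case: (eqVneq D fset0) => [->|D0]; first by rewrite cardfs0 mulr0.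
  have DF : D \in F by rewrite !inE fpowersetE (fsubset_trans DB BA) D0.
  have Dpos : (0 : R) < #|` D|%:R by rewrite ltr0n lt0n cardfs_eq0.
  by rewrite -ler_pdivlMr // ; apply: Bmin.
have H := @key_ind R G X act Hact B Y (f B) K0 hB hmin C.
apply: le_trans H _; exact: ler_wpM2r.
Qed.
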